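(* Let $n,k$ be positive integers, let $\mathbf{U} = (u_{ij}) \in \{0, 1\}^{n \times k}$ be a binary clustering matrix with $\sum_{j=1}^k u_{ij} = 1$ for every $i$, such that $\mathbf{U}^T\mathbf{U}$ is invertible, let $\sigma$ be an element-wise nonlinear function, and define $\mathbf{C} = \mathbf{U} (\mathbf{U}^T \mathbf{U})^{-1} \mathbf{U}^T \in \mathbb{R}^{n\times n}$. Then for every $\mathbf{x} \in \mathbb{R}^{n}$, \[ \sigma(\mathbf{C} \mathbf{x}) = \mathbf{C}^T \sigma( \mathbf{C} \mathbf{x}). \]
   Context: Here $\sigma:\mathbb{R}\to\mathbb{R}$ is applied coordinate-wise to vectors. The condition $\sum_j u_{ij}=1$ means every row of $\mathbf{U}$ contains exactly one entry equal to $1$; invertibility of $\mathbf{U}^T\mathbf{U}$ (a diagonal matrix of cluster sizes) means every cluster is nonempty. *)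

(* Defs.v *)
From mathcomp Require Import all_boot all_order all_algebra.
Set Implicit Arguments. Unset Strict Implicit. Unset Printing Implicit Defensive.
Import Order.TTheory GRing.Theory Num.Theory.
Local Open Scope ring_scope.

Definition clustering_matrix (R : numFieldType) (n k : nat) (U : 'M[R]_(n, k)) : Prop :=
  (forall i j, U i j = 0 \/ U i j = 1) /\
  (forall i, \sum_(j < k) U i j = 1).

Definition clust_proj (R : numFieldType) (n k : nat) (U : 'M[R]_(n, k)) : 'M[R]_n :=
  U *m invmx (U^T *m U) *m U^T.

(* Main.v *)
Require Import Defs.
From mathcomp Require Import all_boot all_order all_algebra.
From mathcomp Require Import reals.
Import Order.TTheory GRing.Theory Num.Theory.
Local Open Scope ring_scope.

Lemma row_indicator (R : realType) (n k : nat) (U : 'M[R]_(n, k))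
  (hU : clustering_matrix U) (i : 'I_n) :
  exists c, U i c = 1 /\ forall j, j != c -> U i j = 0.
Proof.
case: hU => h01 hs.
have [c /eqP Hc|] := pickP (fun j => U i j == 1).
  exists c; split => // j Hj.
  have := hs i; rewrite (bigD1 c) //= Hc => Hs.
  have H0 : \sum_(l < k | l != c) U i l = 0.
    by apply: (addrI 1); rewrite addr0.
  have := psumr_eq0P _ H0 Hj; apply.
  by move=> l _; case: (h01 i l) => ->; rewrite ?lexx ?ler01.
move=> H; exfalso.
have : \sum_(j < k) U i j = 0.
  by apply: big1 => j _; case: (h01 i j) => // E; have := H j; rewrite E eqxx.
by rewrite hs => /eqP; rewrite oner_eq0.
Qed.

Lemma map_U (R : realType) (n k : nat) (U : 'M[R]_(n, k))
  (hU : clustering_matrix U) (sigma : R -> R) (w : 'cV[R]_k) :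
  map_mx sigma (U *m w) = U *m map_mx sigma w.
Proof.
apply/matrixP => i j; rewrite !mxE.
have [c [Hc H0]] := @row_indicator _ _ _ U hU i.
rewrite (bigD1 c) //= big1 ?addr0; last by move=> l Hl; rewrite H0 // mul0r.
rewrite (bigD1 c) //= big1 ?addr0; last by move=> l Hl; rewrite H0 // mul0r.
by rewrite Hc !mul1r mxE.
Qed.

Theorem lemma2 (R : realType) (n k : nat) (hn : (0 < n)%N) (hk : (0 < k)%N)
  (U : 'M[R]_(n, k)) (hU : clustering_matrix U) (hinv : U^T *m U \in unitmx)
  (sigma : R -> R) (x : 'cV[R]_n) :
  map_mx sigma (clust_proj U *m x) = (clust_proj U)^T *m map_mx sigma (clust_proj U *m x).
Proof.
rewrite /clust_proj.
have -> : U *m invmx (U^T *m U) *m U^T *m x = U *m (invmx (U^T *m U) *m U^T *m x).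
  by rewrite !mulmxA.
rewrite (@map_U _ _ _ U hU).
set z := map_mx sigma _.
rewrite !trmx_mul trmxK trmx_inv trmx_mul trmxK.
by rewrite -!mulmxA [U^T *m (U *m z)]mulmxA mulKmx.
Qed.
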